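(* Let $d\in\mathbb{N}$, $Q=[-1/2,1/2]^d$, let $z\in\mathbb{R}^d$ be a unit vector and let $s>0$. Then $$|\{y\in Q:\langle z,y\rangle\ge s\}|\le e^{-\frac78 s^2},$$ where $|\cdot|$ denotes Lebesgue measure. *)

(* Defs.v *)
From Stdlib Require Import Reals.
Open Scope R_scope.

(* Points of R^d are represented as functions nat -> R; only the
   coordinates 0..d-1 are ever inspected. *)

Fixpoint sumd (d : nat) (f : nat -> R) : R :=
  match d with
  | O => 0
  | S n => sumd n f + f n
  end.

Fixpoint prodd (d : nat) (f : nat -> R) : R :=
  match d with
  | O => 1
  | S n => prodd n f * f n
  end.

Definition inner (d : nat) (z y : nat -> R) : R := sumd d (fun i => z i * y i).

Definition in_box (d : nat) (a b y : nat -> R) : Prop :=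
  forall i, (i < d)%nat -> a i <= y i <= b i.

Definition box_vol (d : nat) (a b : nat -> R) : R := prodd d (fun i => b i - a i).

(* Lebesgue (outer) measure in R^d, defined as the infimum over countable
   covers by closed boxes of the total volume.  [leb_measure_le d A c]
   literally unfolds "lambda_d(A) <= c":  for every eps > 0 there is a
   countable cover of A by boxes whose total volume is <= c + eps. *)
Definition leb_measure_le (d : nat) (A : (nat -> R) -> Prop) (c : R) : Prop :=
  forall eps : R, 0 < eps ->
    exists (a b : nat -> nat -> R) (l : R),
      (forall k i, (i < d)%nat -> a k i <= b k i) /\
      (forall y, A y -> exists k, in_box d (a k) (b k) y) /\
      infinite_sum (fun k => box_vol d (a k) (b k)) l /\
      l <= c + eps.

Definition cubeQ (d : nat) (y : nat -> R) : Prop :=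
  forall i, (i < d)%nat -> -(1/2) <= y i <= 1/2.

(* Main.v *)
Require Import Defs.
From Stdlib Require Import Reals Lra Lia List.
Open Scope R_scope.

Definition box : Type := ((nat -> R) * (nat -> R))%type.
Fixpoint listvol (d : nat) (L : list box) : R :=
  match L with nil => 0 | p :: L' => box_vol d (fst p) (snd p) + listvol d L' end.

Definition Cov (d : nat) (A : (nat -> R) -> Prop) (V : R) : Prop :=
  exists L : list box,
    (forall p, In p L -> forall i, (i < d)%nat -> fst p i <= snd p i) /\
    (forall y, A y -> exists p, In p L /\ in_box d (fst p) (snd p) y) /\
    listvol d L <= V.

Lemma cov_mono d (A B : (nat -> R) -> Prop) V W :
  (forall y, A y -> B y) -> Cov d B V -> V <= W -> Cov d A W.
Proof.
  intros HAB [L [H1 [H2 H3]]] HVW. exists L; repeat split; auto.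
  lra.
Qed.

Lemma cov_empty d (A : (nat -> R) -> Prop) V :
  (forall y, ~ A y) -> 0 <= V -> Cov d A V.
Proof.
  intros HA HV. exists nil; repeat split; simpl; auto.
  - intros p [].
  - intros y Hy; exfalso; exact (HA y Hy).
Qed.

Lemma listvol_app d L1 L2 : listvol d (L1 ++ L2) = listvol d L1 + listvol d L2.
Proof. induction L1; simpl; [lra|]. rewrite IHL1; lra. Qed.

Lemma cov_union d (A B : (nat -> R) -> Prop) V1 V2 :
  Cov d A V1 -> Cov d B V2 -> Cov d (fun y => A y \/ B y) (V1 + V2).
Proof.
  intros [L1 [H1 [H2 H3]]] [L2 [G1 [G2 G3]]].
  exists (L1 ++ L2); repeat split.
  - intros p Hp. apply in_app_or in Hp. destruct Hp; auto.
  - intros y [Hy|Hy].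
    + destruct (H2 y Hy) as [p [Hp Hb]]. exists p; split; auto. apply in_or_app; auto.
    + destruct (G2 y Hy) as [p [Hp Hb]]. exists p; split; auto. apply in_or_app; auto.
  - rewrite listvol_app; lra.
Qed.

Lemma cov0 (A : (nat -> R) -> Prop) : Cov 0 A 1.
Proof.
  exists ((fun _ => 0, fun _ => 0) :: nil); repeat split.
  - intros p Hp i Hi; lia.
  - intros y _. exists (fun _ => 0, fun _ => 0); split; [left; auto|].
    intros i Hi; lia.
  - simpl. unfold box_vol; simpl. lra.
Qed.

Lemma prodd_ext d f g : (forall i, (i < d)%nat -> f i = g i) -> prodd d f = prodd d g.
Proof.
  induction d; intros H; simpl; auto.
  rewrite IHd by (intros; apply H; lia). rewrite H by lia. auto.
Qed.

Definition ext (d : nat) (a : nat -> R) (al : R) : nat -> R :=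
  fun i => if Nat.ltb i d then a i else al.

Lemma cov_lift d (B : (nat -> R) -> Prop) V al be :
  Cov d B V -> al <= be -> Cov (S d) (fun y => B y /\ al <= y d <= be) (V * (be - al)).
Proof.
  intros [L [H1 [H2 H3]]] Hab.
  exists (map (fun p => (ext d (fst p) al, ext d (snd p) be)) L); repeat split.
  - intros p Hp i Hi. apply in_map_iff in Hp. destruct Hp as [q [<- Hq]].
    simpl. unfold ext. destruct (Nat.ltb i d) eqn:E.
    + apply H1; auto. apply Nat.ltb_lt; auto.
    + auto.
  - intros y [Hy Hyd]. destruct (H2 y Hy) as [p [Hp Hb]].
    exists (ext d (fst p) al, ext d (snd p) be); split.
    + apply in_map_iff. exists p; auto.
    + intros i Hi. simpl. unfold ext. destruct (Nat.ltb i d) eqn:E.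
      * apply Hb. apply Nat.ltb_lt; auto.
      * apply Nat.ltb_ge in E. assert (i = d) by lia. subst; auto.
  - assert (Hv : forall L', listvol (S d) (map (fun p : box => (ext d (fst p) al, ext d (snd p) be)) L')
       = listvol d L' * (be - al)).
    { induction L'; simpl; [lra|]. rewrite IHL'.
      unfold box_vol. simpl. unfold ext at 3 4. rewrite Nat.ltb_irrefl.
      rewrite (prodd_ext d (fun i => ext d (snd a) be i - ext d (fst a) al i)
                          (fun i => snd a i - fst a i)).
      - ring.
      - intros i Hi. unfold ext. rewrite (proj2 (Nat.ltb_lt i d) Hi). auto. }
    rewrite Hv. apply Rmult_le_compat_r; lra.
Qed.

Lemma cov_slices d N (A : (nat -> R) -> Prop) (al be : nat -> R)
  (B : nat -> (nat -> R) -> Prop) (V : nat -> R) :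
  (forall j, (j < N)%nat -> al j <= be j) ->
  (forall j, (j < N)%nat -> Cov d (B j) (V j)) ->
  (forall y, A y -> exists j, (j < N)%nat /\ al j <= y d <= be j /\ B j y) ->
  Cov (S d) A (sumd N (fun j => V j * (be j - al j))).
Proof.
  revert A. induction N; intros A Hab HB HA.
  - simpl. apply cov_empty; [|lra]. intros y Hy. destruct (HA y Hy) as [j [Hj _]]; lia.
  - simpl. apply cov_mono with
      (B := fun y => (exists j, (j < N)%nat /\ al j <= y d <= be j /\ B j y) \/
                     (B N y /\ al N <= y d <= be N))
      (V := sumd N (fun j => V j * (be j - al j)) + V N * (be N - al N)); [| |lra].
    + intros y Hy. destruct (HA y Hy) as [j [Hj [H1 H2]]].
      destruct (Nat.eq_dec j N).
      * subst; right; auto.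
      * left; exists j; split; [lia|]; split; auto.
    + apply cov_union.
      * apply IHN; [intros j Hj; apply Hab; lia|intros j Hj; apply HB; lia|auto].
      * apply cov_lift; auto.
Qed.

Lemma abs_le_inv x c : Rabs x <= c -> -c <= x <= c.
Proof. unfold Rabs; destruct (Rcase_abs x); lra. Qed.

Lemma abs_le x c : -c <= x <= c -> Rabs x <= c.
Proof. unfold Rabs; destruct (Rcase_abs x); lra. Qed.

Definition kap : R := 11/10.

Lemma exp_up x : x <= 1/11 -> exp x <= 1 + x + kap * x^2.
Proof.
  intros Hx. unfold kap.
  pose proof (exp_ineq1_le (-x)) as H.
  assert (Hm : exp x * exp (-x) = 1).
  { rewrite <- exp_plus. replace (x + - x) with 0 by ring. apply exp_0. }
  assert (Hpos : 0 < exp x) by apply exp_pos.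
  assert (H2 : 1 <= (1 + x + 11/10 * x^2) * (1 - x)) by nra.
  assert (H3 : exp x * (1 - x) <= 1) by nra.
  nra.
Qed.

Definition ch (x : R) : R := (exp x + exp (- x)) / 2.

Lemma ch_small x : Rabs x <= 1/11 -> ch x <= exp (kap * x^2).
Proof.
  intros Hx. unfold ch. apply abs_le_inv in Hx.
  pose proof (exp_up x ltac:(lra)). pose proof (exp_up (-x) ltac:(lra)).
  pose proof (exp_ineq1_le (kap * x^2)). unfold kap in *. nra.
Qed.

Lemma ch_double x : ch x = 2 * ch (x/2) ^ 2 - 1.
Proof.
  unfold ch.
  replace (exp x) with (exp (x/2) * exp (x/2)) by (rewrite <- exp_plus; f_equal; field).
  replace (exp (-x)) with (exp (-(x/2)) * exp (-(x/2))) by (rewrite <- exp_plus; f_equal; field).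
  assert (Hm : exp (x/2) * exp (-(x/2)) = 1).
  { rewrite <- exp_plus. replace (x/2 + - (x/2)) with 0 by ring. apply exp_0. }
  nra.
Qed.

Lemma ch_pos x : 0 < ch x.
Proof. unfold ch. pose proof (exp_pos x); pose proof (exp_pos (-x)); lra. Qed.

Lemma ch_bound_n n : forall x, Rabs x <= 2^n / 11 -> ch x <= exp (kap * x^2).
Proof.
  induction n; intros x Hx.
  - apply ch_small. simpl in Hx. lra.
  - rewrite ch_double.
    assert (Hh : Rabs (x/2) <= 2^n/11).
    { unfold Rdiv at 1. rewrite Rabs_mult. rewrite (Rabs_right (/2)) by lra.
      simpl in Hx. lra. }
    pose proof (IHn _ Hh) as H. pose proof (ch_pos (x/2)).
    set (w := exp (kap * (x/2)^2)) in *.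
    assert (Hw : exp (kap * x^2) = w^4).
    { unfold w. replace (kap * x^2) with (kap*(x/2)^2 + kap*(x/2)^2 + kap*(x/2)^2 + kap*(x/2)^2) by field.
      rewrite !exp_plus. ring. }
    rewrite Hw.
    assert (ch (x/2) ^2 <= w^2) by (apply pow_incr; lra).
    pose proof (pow2_ge_0 (w^2-1)).
    replace (w^4) with ((w^2)^2) by ring. nra.
Qed.

Lemma pow2_ge n : INR n <= 2 ^ n.
Proof.
  induction n; [simpl; lra|]. rewrite S_INR. simpl pow.
  assert (1 <= 2^n) by (apply pow_R1_Rle; lra). lra.
Qed.

Lemma ch_bound x : ch x <= exp (kap * x^2).
Proof.
  destruct (INR_archimed 1 (11 * Rabs x) ltac:(lra)) as [n Hn].
  apply (ch_bound_n n). pose proof (pow2_ge n). lra.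
Qed.

Lemma sumd_plus d f g : sumd d f + sumd d g = sumd d (fun i => f i + g i).
Proof. induction d; simpl; [lra|]. rewrite <- IHd. ring. Qed.

Lemma sumd_le d f g : (forall i, (i < d)%nat -> f i <= g i) -> sumd d f <= sumd d g.
Proof.
  induction d; intros H; simpl; [lra|].
  pose proof (H d ltac:(lia)). assert (sumd d f <= sumd d g) by (apply IHd; intros; apply H; lia). lra.
Qed.

Lemma sumd_const d c : sumd d (fun _ => c) = INR d * c.
Proof. induction d; simpl sumd; [simpl; lra|]. rewrite IHd, S_INR. ring. Qed.

Lemma sumd_ext d f g : (forall i, (i < d)%nat -> f i = g i) -> sumd d f = sumd d g.
Proof.
  induction d; intros H; simpl; auto.
  rewrite IHd by (intros; apply H; lia). rewrite H by lia. auto.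
Qed.

Lemma sumd_lin d a b f g : sumd d (fun i => a * f i + b * g i) = a * sumd d f + b * sumd d g.
Proof. induction d; simpl; [ring|]. rewrite IHd. ring. Qed.

Lemma sumd_nonneg d f : (forall i, (i < d)%nat -> 0 <= f i) -> 0 <= sumd d f.
Proof.
  intros H. replace 0 with (sumd d (fun _ => 0)) by (rewrite sumd_const; ring).
  apply sumd_le; auto.
Qed.

Lemma prodd_exp d f : prodd d (fun i => exp (f i)) = exp (sumd d f).
Proof. induction d; simpl; [rewrite exp_0; auto|]. rewrite IHd, exp_plus. auto. Qed.

Lemma find_slice h (Hh : 0 < h) M : forall x, 0 <= x <= INR (S M) * h ->
  exists j, (j <= M)%nat /\ INR j * h <= x <= (INR j + 1) * h.
Proof.
  induction M; intros x Hx.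
  - exists 0%nat. split; auto. simpl in *. lra.
  - destruct (Rle_dec x (INR (S M) * h)).
    + destruct (IHM x ltac:(lra)) as [j [Hj Hx']]. exists j; split; auto.
    + exists (S M). split; auto. rewrite S_INR in *. rewrite S_INR in Hx. lra.
Qed.

Definition fac (lam h zi : R) : R := exp (lam * Rabs zi * h / 2 + kap * lam^2 * zi^2 / 4).

Lemma prodd_pos d f : (forall i, 0 < f i) -> 0 < prodd d f.
Proof. intros H; induction d; simpl; [lra|]. pose proof (H d); nra. Qed.

Lemma inner_S d z y : inner (S d) z y = inner d z y + z d * y d.
Proof. reflexivity. Qed.

Lemma zdev zd yd c h : -(h/2) <= yd - c <= h/2 -> zd * yd <= zd * c + Rabs zd * h / 2.
Proof.
  intros H. assert (zd * (yd - c) <= Rabs zd * (h/2)).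
  { eapply Rle_trans. apply Rle_abs. rewrite Rabs_mult. apply Rmult_le_compat_l.
    apply Rabs_pos. apply abs_le; lra. }
  lra.
Qed.

Lemma exp_mono x y : x <= y -> exp x <= exp y.
Proof. intros H. destruct (Rle_lt_or_eq_dec _ _ H). left; apply exp_increasing; auto. subst; lra. Qed.

Lemma main_cov (N : nat) (lam : R) : (1 <= N)%nat -> 0 < lam ->
  forall d z t, Cov d (fun y => cubeQ d y /\ inner d z y >= t)
    (exp (- lam * t) * prodd d (fun i => fac lam (/ (2 * INR N)) (z i))).
Proof.
  intros HN Hlam. set (h := / (2 * INR N)).
  assert (HNr : 1 <= INR N) by (apply (le_INR 1); auto).
  assert (Hh : 0 < h) by (unfold h; apply Rinv_0_lt_compat; lra).
  assert (HNh : INR N * h = 1/2) by (unfold h; field; lra).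
  induction d; intros z t.
  - simpl prodd. destruct (Rle_dec t 0).
    + apply cov_mono with (B := fun _ => True) (V := 1); auto.
      apply cov0. pose proof (exp_ineq1_le (- lam * t)). nra.
    + apply cov_empty. intros y [_ Hy]. unfold inner in Hy; simpl in Hy. lra.
      pose proof (exp_pos (-lam*t)). lra.
  - set (zd := z d). set (P := prodd d (fun i => fac lam h (z i))).
    set (c := fun j : nat => (INR j + 1/2) * h).
    set (Vp := fun j => exp (- lam * (t - zd * c j - Rabs zd * h / 2)) * P).
    set (Vm := fun j => exp (- lam * (t + zd * c j - Rabs zd * h / 2)) * P).
    destruct N as [|M]; [lia|].
    assert (Hp : Cov (S d) (fun y => (cubeQ (S d) y /\ inner (S d) z y >= t) /\ 0 <= y d)
       (sumd (S M) (fun j => Vp j * ((INR j + 1) * h - INR j * h)))).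
    { apply cov_slices with
        (B := fun j y => cubeQ d y /\ inner d z y >= t - zd * c j - Rabs zd * h / 2).
      - intros; nra.
      - intros j _. apply IHd.
      - intros y [[HQ Hin] Hy0].
        assert (Hyd : 0 <= y d <= INR (S M) * h) by (pose proof (HQ d ltac:(lia)); lra).
        destruct (find_slice h Hh M (y d) Hyd) as [j [Hj Hj2]].
        exists j. split; [lia|]. split; [auto|]. split.
        + intros i Hi0. apply HQ. lia.
        + rewrite inner_S in Hin. fold zd in Hin.
          pose proof (zdev zd (y d) (c j) h ltac:(unfold c; lra)). lra. }
    assert (Hm : Cov (S d) (fun y => (cubeQ (S d) y /\ inner (S d) z y >= t) /\ y d <= 0)
       (sumd (S M) (fun j => Vm j * (- (INR j * h) - - ((INR j + 1) * h))))).
    { apply cov_slices with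
        (B := fun j y => cubeQ d y /\ inner d z y >= t + zd * c j - Rabs zd * h / 2).
      - intros; nra.
      - intros j _. apply IHd.
      - intros y [[HQ Hin] Hy0].
        assert (Hyd : 0 <= - y d <= INR (S M) * h) by (pose proof (HQ d ltac:(lia)); lra).
        destruct (find_slice h Hh M (- y d) Hyd) as [j [Hj Hj2]].
        exists j. split; [lia|]. split; [lra|]. split.
        + intros i Hi0. apply HQ. lia.
        + rewrite inner_S in Hin. fold zd in Hin.
          pose proof (zdev zd (y d) (- c j) h ltac:(unfold c; lra)). lra. }
    pose proof (cov_union _ _ _ _ _ Hp Hm) as HU.
    eapply cov_mono; [| exact HU |].
    + intros y Hy. destruct (Rle_or_lt 0 (y d)); [left|right]; split; auto; lra.
    + rewrite sumd_plus.
      set (E := exp (- lam * t)). set (X := exp (lam * Rabs zd * h / 2)).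
      set (W := exp (kap * lam^2 * zd^2 / 4)).
      assert (HE : 0 < E) by apply exp_pos. assert (HX : 0 < X) by apply exp_pos.
      assert (HP : 0 < P) by (apply prodd_pos; intros; apply exp_pos).
      apply Rle_trans with (sumd (S M) (fun _ => E * X * P * W * (2 * h))).
      * apply sumd_le. intros j Hj.
        assert (Hc : 0 <= c j <= 1/2).
        { unfold c. split; [pose proof (pos_INR j); nra|].
          assert (INR j + 1 <= INR (S M)) by (rewrite <- S_INR; apply le_INR; lia). nra. }
        set (u := lam * zd * c j).
        assert (E1 : Vp j = E * X * exp u * P).
        { unfold Vp, E, X, u. rewrite <- !exp_plus. replace (- lam * (t - zd * c j - Rabs zd * h / 2)) with (- lam * t + lam * Rabs zd * h / 2 + lam * zd * c j) by lra. reflexivity. }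
        assert (E2 : Vm j = E * X * exp (- u) * P).
        { unfold Vm, E, X, u. rewrite <- !exp_plus. replace (- lam * (t + zd * c j - Rabs zd * h / 2)) with (- lam * t + lam * Rabs zd * h / 2 + - (lam * zd * c j)) by lra. reflexivity. }
        rewrite E1, E2.
        pose proof (ch_bound u) as Hch. unfold ch in Hch.
        assert (Hu : exp (kap * u^2) <= W).
        { unfold W. apply exp_mono. unfold u, kap.
          assert (c j ^ 2 <= 1/4) by nra.
          assert (0 <= lam^2 * zd^2) by (apply Rmult_le_pos; apply pow2_ge_0).
          replace ((lam * zd * c j)^2) with (lam^2 * zd^2 * c j ^2) by lra.
          nra. }
        assert (Hfin : (exp u + exp (-u)) <= 2 * W) by lra.
        replace ((INR j + 1) * h - INR j * h) with h by lra.
        replace (- (INR j * h) - - ((INR j + 1) * h)) with h by lra.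
        assert (0 < E * X * P * h) by (repeat apply Rmult_lt_0_compat; auto).
        nra.
      * rewrite sumd_const. simpl prodd. fold P.
        unfold fac. fold zd.
        replace (exp (lam * Rabs zd * h / 2 + kap * lam ^ 2 * zd ^ 2 / 4)) with (X * W)
          by (unfold X, W; rewrite exp_plus; auto).
        replace (INR (S M) * (E * X * P * W * (2 * h))) with (E * X * P * W * (2 * (INR (S M) * h))) by ring.
        rewrite HNh. lra.
Qed.

Definition z0 : box := (fun _ => 0, fun _ => 0).

Lemma sum_nth d (H0 : box_vol d (fst z0) (snd z0) = 0) : forall L n, (length L <= S n)%nat ->
  sum_f_R0 (fun k => box_vol d (fst (nth k L z0)) (snd (nth k L z0))) n = listvol d L.
Proof.
  induction L as [|p L IH]; intros n Hn.
  - simpl. transitivity (sum_f_R0 (fun _ => 0) n).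
    + apply sum_eq. intros i _. destruct i; simpl; auto.
    + rewrite sum_cte. ring.
  - destruct n as [|m].
    + simpl in Hn. destruct L; [|simpl in Hn; lia]. simpl. lra.
    + rewrite decomp_sum by lia. simpl. f_equal. apply IH. simpl in Hn; lia.
Qed.

Lemma cov_leb d A V c : (1 <= d)%nat -> Cov d A V -> V <= c -> leb_measure_le d A c.
Proof.
  intros Hd [L [H1 [H2 H3]]] Hc eps Heps.
  assert (H0 : box_vol d (fst z0) (snd z0) = 0).
  { destruct d; [lia|]. unfold box_vol; simpl. ring. }
  exists (fun k => fst (nth k L z0)), (fun k => snd (nth k L z0)), (listvol d L).
  repeat split.
  - intros k i Hi. destruct (Nat.lt_ge_cases k (length L)).
    + apply H1; auto. apply nth_In; auto.
    + rewrite nth_overflow by auto. simpl. lra.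
  - intros y Hy. destruct (H2 y Hy) as [p [Hp Hb]].
    destruct (In_nth L p z0 Hp) as [k [Hk Hk2]]. exists k. rewrite Hk2. auto.
  - intros e He. exists (length L). intros n Hn.
    rewrite sum_nth by (auto; lia). unfold Rdist. rewrite Rminus_diag, Rabs_R0. lra.
  - lra.
Qed.

Theorem mainTheorem13 (d : nat) (z : nat -> R) (s : R)
  (hz : inner d z z = 1) (hs : 0 < s) :
  leb_measure_le d (fun y => cubeQ d y /\ inner d z y >= s)
    (exp (- (7/8) * s ^ 2)).
Proof.
  destruct d as [|d'].
  { unfold inner in hz; simpl in hz. lra. }
  set (d := S d') in *.
  set (Sz := sumd d (fun i => Rabs (z i))).
  assert (HS : 0 <= Sz) by (apply sumd_nonneg; intros; apply Rabs_pos).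
  destruct (INR_archimed 1 (20 * Sz / s + 1) ltac:(lra)) as [N HN].
  rewrite Rmult_1_r in HN.
  assert (HNs : 20 * Sz / s >= 0) by (apply Rle_ge; unfold Rdiv; apply Rmult_le_pos; [lra|]; left; apply Rinv_0_lt_compat; lra).
  assert (HN1 : (1 <= N)%nat).
  { destruct N; [simpl in HN; lra|lia]. }
  set (lam := 20 * s / 11).
  assert (Hlam : 0 < lam) by (unfold lam; lra).
  apply cov_leb with (V := exp (- lam * s) * prodd d (fun i => fac lam (/ (2 * INR N)) (z i))).
  - unfold d; lia.
  - apply main_cov; auto.
  - set (h := / (2 * INR N)).
    assert (Hh : 0 < h) by (unfold h; apply Rinv_0_lt_compat; lra).
    unfold fac. rewrite prodd_exp, <- exp_plus. apply exp_mono.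
    rewrite (sumd_ext d (fun i => lam * Rabs (z i) * h / 2 + kap * lam ^ 2 * z i ^ 2 / 4) (fun i => (lam * h / 2) * Rabs (z i) + (kap * lam^2 / 4) * (z i * z i)))
      by (intros i _; field).
    rewrite sumd_lin. fold Sz. unfold inner in hz. rewrite hz.
    assert (HhS : h * Sz <= s / 40).
    { unfold h. apply Rmult_le_reg_l with (2 * INR N); [lra|].
      rewrite <- Rmult_assoc, Rinv_r by lra.
      assert (Sz <= s * (INR N) / 20).
      { assert (20 * Sz / s * s = 20 * Sz) by (field; lra).
        nra. }
      lra. }
    unfold lam, kap. nra.
Qed.
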